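(* Let $\mathbb O=\{-1,0,1\}$ and $\theta=0$. If $x(0)\in\mathbb O^n$ has no coordinate equal to $0$, then there exists a finite legal update sequence from $x(0)$ leading the system either to a consensus state $(z,\dots,z)$ with $z\neq0$ or to a non-consensus equilibrium.
   Context: Let $n\ge1$, $\mathcal V=\{1,\dots,n\}$, and let $W=(w_{ij})$ be an $n\times n$ row-stochastic matrix. For $x\in\mathbb O^n$, $i\in\mathcal V$, $z\in\mathbb O$, define $C^i_{\mathrm{social}}(z;x)=\sum_{j=1}^n w_{ij}|z-x_j|$ and $P_i(x)=\{z\in\mathbb O: C^i_{\mathrm{social}}(z;x)\le C^i_{\mathrm{social}}(x_i;x),\ |z-\theta|\le |x_i-\theta|\}$. A legal update sequence from $x(0)$ is a finite sequence $(i_1,z_1),\dots,(i_T,z_T)$ with $i_t\in\mathcal V$, generating $x(1),\dots,x(T)$ where $x(t)$ is obtained from $x(t-1)$ by setting coordinate $i_t$ to $z_t$, such that $z_t\in P_{i_t}(x(t-1))$ for every $t$. An equilibrium is a state $x^*$ with $P_i(x^* )=\{x_i^*\}$ for all $i\in\mathcal V$; it is non-consensus if not all coordinates are equal. *)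

(* Defs.v *)
From HB Require Import structures.
From mathcomp Require Import all_boot all_order all_algebra.
Set Implicit Arguments. Unset Strict Implicit. Unset Printing Implicit Defensive.
Import Order.TTheory GRing.Theory Num.Theory.
Local Open Scope ring_scope.

Definition inO (z : int) : bool := z \in [:: -1; 0; 1].

Definition theta : int := 0.

Definition state (n : nat) := 'I_n -> int.

Definition in_On (n : nat) (x : state n) : Prop := forall i, inO (x i).

Definition row_stochastic (R : realFieldType) (n : nat) (W : 'M[R]_n) : Prop :=
  (forall i j, 0 <= W i j) /\ (forall i, \sum_j W i j = 1).

Definition C_social (R : realFieldType) (n : nat) (W : 'M[R]_n)
  (i : 'I_n) (z : int) (x : state n) : R :=
  \sum_j W i j * (`|z - x j|%:~R).

Definition P_i (R : realFieldType) (n : nat) (W : 'M[R]_n)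
  (i : 'I_n) (x : state n) (z : int) : Prop :=
  [/\ inO z,
      C_social W i z x <= C_social W i (x i) x
    & `|z - theta| <= `|x i - theta|].

Definition update (n : nat) (x : state n) (i : 'I_n) (z : int) : state n :=
  fun j => if j == i then z else x j.

Fixpoint legal (R : realFieldType) (n : nat) (W : 'M[R]_n)
  (x : state n) (s : seq ('I_n * int)) : Prop :=
  match s with
  | [::] => True
  | (i, z) :: s' => P_i W i x z /\ legal W (update x i z) s'
  end.

Fixpoint final_state (n : nat) (x : state n) (s : seq ('I_n * int)) : state n :=
  match s with
  | [::] => x
  | (i, z) :: s' => final_state (update x i z) s'
  end.

(* Equilibrium: P_i(x) = {x_i} for all i (x_i always belongs to P_i(x)). *)
Definition equilibrium (R : realFieldType) (n : nat) (W : 'M[R]_n)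
  (x : state n) : Prop :=
  forall i z, P_i W i x z <-> z = x i.

Definition consensus_state (n : nat) (x : state n) (z : int) : Prop :=
  forall i, x i = z.

Definition non_consensus (n : nat) (x : state n) : Prop :=
  exists i j, x i != x j.

(* Main.v *)
Require Import Defs.
From HB Require Import structures.
From mathcomp Require Import all_boot all_order all_algebra.
From mathcomp Require Import lra.
Set Implicit Arguments. Unset Strict Implicit. Unset Printing Implicit Defensive.
Import Order.TTheory GRing.Theory Num.Theory.
Local Open Scope ring_scope.

Section S.
Variables (R : realFieldType) (n : nat) (W : 'M[R]_n).

Definition Aw (x : state n) i (v : int) : R := \sum_j W i j * (x j == v)%:R.

Lemma decomp (x : state n) i (g : int -> R) : in_On x ->
  \sum_j W i j * g (x j) = g 1 * Aw x i 1 + g 0 * Aw x i 0 + g (-1) * Aw x i (-1).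
Proof.
move=> hx; rewrite /Aw !mulr_sumr -!big_split; apply: eq_bigr => j _ /=.
have := hx j; rewrite /inO !inE; case/or3P => /eqP ->; rewrite /=; lra.
Qed.

Lemma Asum (x : state n) i : row_stochastic W -> in_On x ->
  Aw x i 1 + Aw x i 0 + Aw x i (-1) = 1.
Proof.
move=> [_ hs] hx; rewrite -(hs i).
have := decomp i (fun _ => 1) hx; rewrite !mul1r => <-.
by apply: eq_bigr => j _; rewrite mulr1.
Qed.

Lemma Age0 (x : state n) i v : row_stochastic W -> 0 <= Aw x i v.
Proof. move=> [h _]; apply: sumr_ge0 => j _; apply: mulr_ge0 => //; exact: ler0n. Qed.

Lemma costE (x : state n) i z : in_On x ->
  C_social W i z x = (`|z - 1|)%:~R * Aw x i 1 + (`|z - 0|)%:~R * Aw x i 0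
     + (`|z - -1|)%:~R * Aw x i (-1).
Proof. move=> hx; exact: (decomp i (fun t => (`|z - t|)%:~R) hx). Qed.

Lemma absvals :
  ((`|1 - 1 : int|%:~R : R) = 0) * ((`|1 - 0 : int|%:~R : R) = 1) * ((`|1 - -1 : int|%:~R : R) = 2) *
  ((`|0 - 1 : int|%:~R : R) = 1) * ((`|0 - 0 : int|%:~R : R) = 0) * ((`|0 - -1 : int|%:~R : R) = 1) *
  ((`|-1 - 1 : int|%:~R : R) = 2) * ((`|-1 - 0 : int|%:~R : R) = 1) * ((`|-1 - -1 : int|%:~R : R) = 0).
Proof. by []. Qed.

Lemma cost1 (x : state n) i : in_On x ->
  C_social W i 1 x = Aw x i 0 + 2 * Aw x i (-1).
Proof. move=> hx; rewrite costE // !absvals; lra. Qed.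
Lemma cost0 (x : state n) i : in_On x ->
  C_social W i 0 x = Aw x i 1 + Aw x i (-1).
Proof. move=> hx; rewrite costE // !absvals; lra. Qed.
Lemma costm1 (x : state n) i : in_On x ->
  C_social W i (-1) x = 2 * Aw x i 1 + Aw x i 0.
Proof. move=> hx; rewrite costE // !absvals; lra. Qed.

Lemma ieq1 : (1 == -1 :> int) = false. Proof. by []. Qed.
Lemma ieq2 : (0 == -1 :> int) = false. Proof. by []. Qed.
Lemma ieq3 : (0 == 1 :> int) = false. Proof. by []. Qed.

Lemma inO1 : inO 1. Proof. by []. Qed.
Lemma inO0 : inO 0. Proof. by []. Qed.

Definition zf (x : state n) := forall j, x j != 0.

Lemma inO_cases z : inO z -> [\/ z = 1, z = 0 | z = -1].
Proof. by rewrite /inO !inE; case/or3P => /eqP ->; [constructor 3|constructor 2|constructor 1]. Qed.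

Lemma stuck_pos (x : state n) i : row_stochastic W -> in_On x -> x i = 1 ->
  1 < 2 * Aw x i 1 -> forall z, P_i W i x z -> z = x i.
Proof.
move=> hW hx hi hA z [hz hc _]; rewrite hi; have := Asum i hW hx.
have := Age0 x i 0 hW; have := Age0 x i 1 hW; have := Age0 x i (-1) hW.
move=> h1 h2 h3 h4; rewrite hi in hc.
case: (inO_cases hz) => ? ; subst z => //.
- rewrite cost0 // cost1 // in hc; have : (1 < 1 :> R) by lra.
  by rewrite ltxx.
- rewrite costm1 // cost1 // in hc; have : (1 < 1 :> R) by lra.
  by rewrite ltxx.
Qed.

Lemma stuck_neg (x : state n) i : row_stochastic W -> in_On x -> x i = -1 ->
  1 < 2 * Aw x i (-1) -> forall z, P_i W i x z -> z = x i.
Proof.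
move=> hW hx hi hA z [hz hc _]; rewrite hi; have := Asum i hW hx.
have := Age0 x i 0 hW; have := Age0 x i 1 hW; have := Age0 x i (-1) hW.
move=> h1 h2 h3 h4; rewrite hi in hc.
case: (inO_cases hz) => ? ; subst z => //.
- rewrite cost1 // costm1 // in hc; have : (1 < 1 :> R) by lra.
  by rewrite ltxx.
- rewrite cost0 // costm1 // in hc; have : (1 < 1 :> R) by lra.
  by rewrite ltxx.
Qed.

Lemma stuck_zero (x : state n) i : x i = 0 -> forall z, P_i W i x z -> z = x i.
Proof.
move=> hi z [_ _]; rewrite hi /theta !subr0 normr0 normr_le0 => /eqP //.
Qed.

Lemma move_zero (x : state n) i : row_stochastic W -> in_On x -> x i = 1 ->
  2 * Aw x i 1 <= 1 -> P_i W i x 0.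
Proof.
move=> hW hx hi hA; split => //.
rewrite hi cost0 // cost1 //; have := Asum i hW hx.
have := Age0 x i 0 hW; have := Age0 x i 1 hW; have := Age0 x i (-1) hW; lra.
Qed.

Lemma flip_up (x : state n) i : row_stochastic W -> in_On x -> zf x -> x i = -1 ->
  2 * Aw x i (-1) <= 1 -> P_i W i x 1.
Proof.
move=> hW hx hz hi hA; split => //.
have A0 : Aw x i 0 = 0.
  by rewrite /Aw big1 // => j _; rewrite (negbTE (hz j)) mulr0.
rewrite hi cost1 // costm1 //; have := Asum i hW hx.
have := Age0 x i 0 hW; have := Age0 x i 1 hW; have := Age0 x i (-1) hW; lra.
by rewrite hi /theta.
Qed.

Lemma legal_cat (x : state n) s1 s2 :
  legal W x s1 -> legal W (final_state x s1) s2 -> legal W x (s1 ++ s2).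
Proof.
elim: s1 x => [|[i z] s1 IH] x //= [h1 h2] h3; split => //; exact: IH.
Qed.

Lemma final_cat (x : state n) s1 s2 :
  final_state x (s1 ++ s2) = final_state (final_state x s1) s2.
Proof. by elim: s1 x => [|[i z] s1 IH] x //=. Qed.

Lemma inO_update (x : state n) i z : in_On x -> inO z -> in_On (update x i z).
Proof. by move=> hx hz j; rewrite /update; case: eqP. Qed.

Lemma phase1 m (x : state n) : row_stochastic W ->
  (#|[set j | x j == (-1)%R]| <= m)%N -> in_On x -> zf x ->
  exists s, legal W x s /\ [/\ in_On (final_state x s), zf (final_state x s) &
    forall i, final_state x s i = -1 -> 1 < 2 * Aw (final_state x s) i (-1)].
Proof.
move=> hW; elim: m x => [|m IH] x hc hx hz.
  exists [::]; split => //=; split => // i hi.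
  move: hc; rewrite leqn0 cards_eq0 => /eqP /setP /(_ i); by rewrite !inE hi eqxx.
case: (pickP (fun i => (x i == -1) && (2 * Aw x i (-1) <= 1))) => [i /andP [/eqP hi hA]|hn].
- have hP := flip_up hW hx hz hi hA.
  have hpr : [set j | update x i 1 j == -1] \proper [set j | x j == -1].
    apply/properP; split.
      by apply/subsetP => j; rewrite !inE /update; case: (j == i); rewrite ?ieq1.
    by exists i; rewrite !inE /update ?eqxx ?hi ?ieq1.
  have := proper_card hpr => hlt.
  have hz' : zf (update x i 1) by move=> j; rewrite /update; case: (j == i).
  have [s [hl hs]] := IH (update x i 1) (ltnSE (leq_trans hlt hc))
     (inO_update i hx inO1) hz'.
  by exists ((i, 1) :: s); split.
- exists [::]; split => //=; split => // i hi.
  by have := hn i; rewrite hi eqxx /= => /negbT; rewrite -ltNge.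
Qed.

Definition Inv (y : state n) := forall i, y i = -1 -> 1 < 2 * Aw y i (-1).

Lemma phase2 m (y : state n) : row_stochastic W ->
  (#|[set j | y j == 1%R]| <= m)%N -> in_On y -> Inv y ->
  exists s, legal W y s /\ equilibrium W (final_state y s) /\
    (forall j, y j = -1 -> final_state y s j = -1).
Proof.
move=> hW; elim: m y => [|m IH] y hc hx hI.
- exists [::]; split => //=; split => // i z; split; last first.
    by move=> ->; split => //.
  case: (inO_cases (hx i)) => hi.
  + move: hc; rewrite leqn0 cards_eq0 => /eqP /setP /(_ i); by rewrite !inE hi eqxx.
  + exact: stuck_zero.
  + exact: stuck_neg hW hx hi (hI i hi) z.
case: (pickP (fun i => (y i == 1) && (2 * Aw y i 1 <= 1))) => [i /andP [/eqP hi hA]|hn].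
- have hP := move_zero hW hx hi hA.
  have hpr : [set j | update y i 0 j == 1] \proper [set j | y j == 1].
    apply/properP; split.
      by apply/subsetP => j; rewrite !inE /update; case: (j == i); rewrite ?ieq3.
    by exists i; rewrite !inE /update ?eqxx ?hi ?ieq3.
  have := proper_card hpr => hlt.
  have hAeq : forall k, Aw (update y i 0) k (-1) = Aw y k (-1).
    move=> k; apply: eq_bigr => j _; rewrite /update.
    case: (eqVneq j i) => [->|hji]; first by rewrite ?eqxx hi ieq2 ieq1.
    by rewrite ?(negbTE hji).
  have hI' : Inv (update y i 0).
    move=> k; rewrite hAeq /update; case: eqP => // _; exact: hI.
  have [s [hl [he hs]]] := IH (update y i 0) (ltnSE (leq_trans hlt hc))
     (inO_update i hx inO0) hI'.
  exists ((i, 0) :: s); split => //; split => // j hj; apply: hs.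
  rewrite /update; case: eqP => // e; by move: hj; rewrite e hi.
- exists [::]; split => //=; split => // i z; split; last first.
    by move=> ->; split => //.
  case: (inO_cases (hx i)) => hi.
  + have hA : 1 < 2 * Aw y i 1.
      by have := hn i; rewrite hi eqxx /= => /negbT; rewrite -ltNge.
    exact: stuck_pos hW hx hi hA z.
  + exact: stuck_zero.
  + exact: stuck_neg hW hx hi (hI i hi) z.
Qed.
End S.

Unset Implicit Arguments.

Theorem lemma5 (R : realFieldType) (n : nat) (W : 'M[R]_n) (x0 : state n) :
  (0 < n)%N ->
  row_stochastic W ->
  in_On x0 ->
  (forall i, x0 i != 0) ->
  exists s : seq ('I_n * int),
    legal W x0 s /\
    ((exists z : int, z != 0 /\ consensus_state (final_state x0 s) z) \/
     (equilibrium W (final_state x0 s) /\ non_consensus (final_state x0 s))).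
Proof.
move=> _ hW hx hz.
have [s1 [hl1 [hy hyz hI]]] := phase1 hW (leqnn _) hx hz.
set y := final_state x0 s1 in hy hyz hI.
case: (pickP (fun j => y j == -1)) => [j /eqP hj|hn].
- have [s2 [hl2 [he hs]]] := phase2 hW (leqnn _) hy hI.
  exists (s1 ++ s2); split; first exact: legal_cat.
  rewrite final_cat -/y.
  case: (pickP (fun k => final_state y s2 k != -1)) => [k hk|hk].
  + right; split => //; exists k, j; by rewrite (hs j hj).
  + left; exists (-1); split => // k; by have := hk k => /negbFE /eqP.
- exists s1; split => //; left; exists 1; split => // k.
  case: (inO_cases (hy k)) => // hk.
  + by have := hyz k; rewrite hk.
  + by have := hn k; rewrite hk eqxx.
Qed.
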